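(* For all $n\in\mathbb{N}$ and $q\ge 2$, $\kappa_{n,q}\ge \lfloor n/2\rfloor$.
   Context: Let $q\ge 2$, $A=\{0,1,\dots,q-1\}$, $[n]=\{1,\dots,n\}$, and let $F(n,q)$ be the set of all maps $A^n\to A^n$. For $f\in F(m,q)$ and $i\in[m]$, $f_i$ is the $i$-th coordinate function and $f^i(x)=(x_1,\dots,x_{i-1},f_i(x),x_{i+1},\dots,x_m)$; for a word $w=(w_1,\dots,w_t)$ over $[m]$, $f^w=f^{w_t}\circ\cdots\circ f^{w_1}$. $\Pi([m])$ is the set of permutations of $[m]$ written as words $(w_1,\dots,w_m)$; $w(i)$ is the position of $i$ in $w$. $\mathrm{pr}_{[n]}:A^m\to A^n$ is the projection onto the first $n$ coordinates. For $m\ge n$, $(f,w)$ with $f\in F(m,q)$, $w\in\Pi([m])$ sequentializes $h\in F(n,q)$ if $\mathrm{pr}_{[n]}\circ f^w=h\circ\mathrm{pr}_{[n]}$. For $u\in\Pi([n])$, $w\in\Pi([m])$ respects $u$ if for all $i,j\in[n]$, $u(i)<u(j)$ implies $w(i)<w(j)$. $\kappa(h,u)$ is the smallest $k\ge0$ such that some $f\in F(n+k,q)$ and $w\in\Pi([n+k])$ respecting $u$ sequentialize $h$. Finally $\kappa_{n,q}=\max\{\kappa(h,u): h\in F(n,q),\ u\in\Pi([n])\}$. *)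

(* Defs.v *)
From mathcomp Require Import all_boot.
From Stdlib Require Import ClassicalEpsilon.

Set Implicit Arguments.
Unset Strict Implicit.
Unset Printing Implicit Defensive.

(* Alphabet A = {0,..,q-1} is 'I_q; coordinates [m] = {1..m} are 'I_m (0-based). *)
Definition pt (m q : nat) := {ffun 'I_m -> 'I_q}.

Definition Fmap (m q : nat) := {ffun pt m q -> pt m q}.

Definition upd m q (f : Fmap m q) (i : 'I_m) (x : pt m q) : pt m q :=
  [ffun j => if j == i then f x i else x j].

(* f^w = f^{w_t} o ... o f^{w_1}  (w_1 applied first). *)
Definition fword m q (f : Fmap m q) (w : seq 'I_m) (x : pt m q) : pt m q :=
  foldl (fun y i => upd f i y) x w.

Definition pr n k q (x : pt (n + k) q) : pt n q := [ffun i => x (lshift k i)].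

Definition respects n k (u : n.-tuple 'I_n) (w : (n + k).-tuple 'I_(n + k)) : bool :=
  [forall i : 'I_n, forall j : 'I_n,
     (index i u < index j u) ==> (index (lshift k i) w < index (lshift k j) w)].

Definition sequentializes n k q (f : Fmap (n + k) q) (w : seq 'I_(n + k))
    (h : Fmap n q) : bool :=
  [forall x : pt (n + k) q, pr (fword f w x) == h (pr x)].

(* some f in F(n+k,q) and permutation word w of [n+k] respecting u sequentialize h;
   permutation words of [m] are the uniq m-tuples over 'I_m *)
Definition seqb n q (h : Fmap n q) (u : n.-tuple 'I_n) (k : nat) : bool :=
  [exists f : Fmap (n + k) q, exists w : (n + k).-tuple 'I_(n + k),
     [&& uniq w, respects u w & sequentializes f w h]].

(* kappa(h,u): the least such k (0 if none exists; it always exists, e.g. k = n). *)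
Definition kappa n q (h : Fmap n q) (u : n.-tuple 'I_n) : nat :=
  match excluded_middle_informative (exists k, seqb h u k) with
  | left e => ex_minn e
  | right _ => 0
  end.

Definition kappa_nq (n q : nat) : nat :=
  \max_(h : Fmap n q) \max_(u : n.-tuple 'I_n | uniq u) kappa h u.

(* Main.v *)
Require Import Defs.
From mathcomp Require Import all_boot.
From mathcomp Require Import zify.
From Stdlib Require Import ClassicalEpsilon.

Set Implicit Arguments.
Unset Strict Implicit.
Unset Printing Implicit Defensive.

Lemma split_l m n (i : 'I_m) : split (lshift n i) = inl i.
Proof. exact: (unsplitK (inl _ i)). Qed.

Lemma split_r m n (i : 'I_n) : split (rshift m i) = inr i.
Proof. exact: (unsplitK (inr _ i)). Qed.

Lemma fword_cons m q (f : Fmap m q) a s x :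
  fword f (a :: s) x = fword f s (upd f a x).
Proof. by []. Qed.

Lemma fword_cat m q (f : Fmap m q) s1 s2 x :
  fword f (s1 ++ s2) x = fword f s2 (fword f s1 x).
Proof. by rewrite /fword foldl_cat. Qed.

Lemma fword_notin m q (f : Fmap m q) (s : seq 'I_m) (x : pt m q) c :
  c \notin s -> fword f s x c = x c.
Proof.
elim: s x => [|a s IH] x //.
rewrite inE negb_or => /andP[ca cs].
by rewrite fword_cons IH // ffunE (negbTE ca).
Qed.

Lemma fword_in m q (f : Fmap m q) (s : seq 'I_m) (x : pt m q) :
  (forall c, c \in s -> forall y y' : pt m q, (forall d, d \notin s -> y d = y' d) ->
       f y c = f y' c) -> uniq s ->
  forall c, fword f s x c = if c \in s then f x c else x c.
Proof.
elim: s x => [|a s IH] x Hdep //.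
move=> /andP[as_ us] c.
rewrite fword_cons IH //; last first.
  move=> c' c's y y' Hyy; apply: Hdep; first by rewrite inE c's orbT.
  move=> d; rewrite inE negb_or => /andP[_ ds]; exact: Hyy.
rewrite inE; case: ifP => cs.
  rewrite orbT; apply: Hdep; first by rewrite inE cs orbT.
  move=> d; rewrite inE negb_or => /andP[da _]; by rewrite ffunE (negbTE da).
rewrite orbF ffunE; case: eqP => [->|] //.
Qed.

Definition hrev n q : Fmap n q := [ffun x : pt n q => [ffun i : 'I_n => x (rev_ord i)]].

Definition f0 n q : Fmap (n + n) q :=
  [ffun y : pt (n + n) q => [ffun c : 'I_(n + n) => match split c with
                        | inl i => y (rshift n (rev_ord i))
                        | inr j => y (lshift n j) end]].

Definition ws n : seq 'I_(n + n) :=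
  map (@rshift n n) (enum 'I_n) ++ map (@lshift n n) (enum 'I_n).

Lemma size_ws n : size (ws n) == n + n.
Proof. by rewrite /ws size_cat !size_map -enumT size_enum_ord. Qed.

Lemma existence n q : seqb (hrev n q) (ord_tuple n) n.
Proof.
apply/existsP; exists (f0 n q).
apply/existsP; exists (Tuple (size_ws n)).
have Hl : forall i : 'I_n, lshift n i \notin map (@rshift n n) (enum 'I_n).
  by move=> i; apply/mapP => [[j _ /eqP]]; rewrite eq_lrshift.
have Hr : forall i : 'I_n, rshift n i \notin map (@lshift n n) (enum 'I_n).
  by move=> i; apply/mapP => [[j _ /eqP]]; rewrite eq_rlshift.
have U1 : uniq (map (@rshift n n) (enum 'I_n)).
  by rewrite map_inj_uniq ?enum_uniq //; exact: rshift_inj.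
have U2 : uniq (map (@lshift n n) (enum 'I_n)).
  by rewrite map_inj_uniq ?enum_uniq //; exact: lshift_inj.
apply/and3P; split.
- rewrite /= /ws cat_uniq U1 U2 andbT /=.
  apply/hasP => [[c /mapP [i _ ->]]]; exact/negP/Hl.
- apply/forallP => i; apply/forallP => j; apply/implyP => lt.
  rewrite /= /ws !index_cat (negbTE (Hl i)) (negbTE (Hl j)).
  rewrite !index_map; first (rewrite ltn_add2l; by move: lt; rewrite /= -enumT); by [exact: lshift_inj | move=> ? ? ->].
- apply/forallP => x; apply/eqP/ffunP => i.
  rewrite /pr /hrev !ffunE /= /ws fword_cat.
  rewrite fword_in //; last first.
    move=> c /mapP [j _ ->] y y' Hyy; rewrite !ffunE split_l; apply: Hyy; exact: Hr.
  rewrite map_f ?mem_enum // !ffunE split_l.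
  rewrite fword_in //; last first.
    move=> c /mapP [j _ ->] y y' Hyy; rewrite !ffunE split_r; apply: Hyy; exact: Hl.
  by rewrite map_f ?mem_enum // !ffunE split_r.
Qed.

Lemma lower n q k (hq : 2 <= q) (f : Fmap (n + k) q) (w : (n + k).-tuple 'I_(n + k)) :
  uniq w -> respects (ord_tuple n) w -> sequentializes f w (hrev n q) -> n./2 <= k.
Proof.
move=> uw rw sw.
set m := n./2.
have hmm : m + m <= n by rewrite addnn -[X in _ <= X](odd_double_half n) leq_addl.
case: (posnP m) => [->|m0] //.
have hi0 : m.-1 < n by lia.
set i0 : 'I_n := Ordinal hi0.
set p := index (lshift k i0) w.
set w1 := take p.+1 w.
set w2 := drop p.+1 w.
have mem_w : forall c, c \in (w : seq _).
  move=> c; apply/negPn/negP => cw.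
  have : size (c :: w) <= size (enum 'I_(n + k)).
    by apply: uniq_leq_size => [|d _]; rewrite ?mem_enum //= cw uw.
  by rewrite /= size_tuple size_enum_ord ltnn.
have R : forall i j : 'I_n, i < j -> index (lshift k i) w < index (lshift k j) w.
  move=> i j; move/forallP: rw => /(_ i)/forallP/(_ j)/implyP.
  have I : forall x : 'I_n, index x (ord_tuple n) = x by move=> x; exact: index_enum_ord.
  by rewrite !I.
have inw1 : forall i : 'I_n, (lshift k i \in w1) = (i < m).
  move=> i; rewrite in_take ?mem_w // ltnS.
  case: (ltngtP i i0) => h.
  - rewrite ltnW ?R //; rewrite /= in h; lia.
  - have := R _ _ h; rewrite -/p => h2; rewrite leqNgt h2 /=; rewrite /= in h; lia.
  - have -> : i = i0 by apply: val_inj.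
    by rewrite leqnn /=; lia.
have cat_w : w1 ++ w2 = w by rewrite cat_take_drop.
have notw2 : forall c, c \in w1 -> c \notin w2.
  move: uw; rewrite -cat_w cat_uniq => /and3P [_ H _] c cw1.
  apply/negP => cw2; apply: (negP H); apply/hasP; by exists c.
have fw : forall x, fword f w x = fword f w2 (fword f w1 x).
  by move=> x; rewrite -fword_cat cat_w.
have sq : forall x, pr (fword f w x) = hrev n q (pr x).
  by move=> x; move/forallP: sw => /(_ x)/eqP.
have sqp : forall x (i : 'I_n), fword f w x (lshift k i) = x (lshift k (rev_ord i)).
  move=> x i; have := congr1 (fun g : pt n q => g i) (sq x).
  by rewrite /pr /hrev !ffunE.
have z0 : 'I_q := Ordinal (ltnW hq).
pose e (a : pt m q) : pt (n + k) q :=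
  [ffun c : 'I_(n + k) => match (insub (val c) : option 'I_m) with Some j => a j | None => z0 end].
have eL : forall a (i : 'I_n) (j : 'I_m), val i = val j -> e a (lshift k i) = a j.
  move=> a i j hij; rewrite ffunE /=; case: insubP => [j' _ hj'|].
    by congr (a _); apply: val_inj; rewrite hj'.
  by rewrite hij ltn_ord.
have eL0 : forall a (i : 'I_n), m <= i -> e a (lshift k i) = z0.
  move=> a i hi; rewrite ffunE /=; case: insubP => [j' hj' _|] //.
  by rewrite ltnNge hi in hj'.
have yz : forall a (i : 'I_n), i < m -> fword f w1 (e a) (lshift k i) = z0.
  move=> a i him.
  rewrite -(@fword_notin _ _ f w2 (fword f w1 (e a)) _ (notw2 _ _)); last by rewrite inw1.
  rewrite -fw.
  have := congr1 (fun g : pt n q => g i) (sq (e a)); rewrite /pr /hrev !ffunE => ->.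
  case: insubP => [j' hj' _|] //; rewrite /= in hj'; lia.
pose G (a : pt m q) : pt k q := [ffun j => fword f w1 (e a) (rshift n j)].
have Ginj : injective G.
  move=> a a' HG.
  have Hy : fword f w1 (e a) = fword f w1 (e a').
    apply/ffunP => c; case: (splitP c) => [i hi|j hj].
    - have -> : c = lshift k i by apply: val_inj.
      case im: (i < m); first by rewrite !yz.
      rewrite !fword_notin ?inw1 ?im // !eL0 //; lia.
    - have -> : c = rshift n j by apply: val_inj.
      by have := congr1 (fun g : pt k q => g j) HG; rewrite /G !ffunE.
  apply/ffunP => j.
  have hjn : j < n by have := ltn_ord j; lia.
  set i : 'I_n := Ordinal hjn.
  rewrite -(eL a i j) // -(eL a' i j) //.
  have E : forall b, e b (lshift k i) = fword f w (e b) (lshift k (rev_ord i)).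
    by move=> b; rewrite sqp rev_ordK.
  by rewrite !E !fw Hy.
have := leq_card G Ginj.
rewrite !card_ffun !card_ord leq_exp2l //.
Qed.

Theorem mainTheorem2 (n q : nat) (hq : 2 <= q) : n./2 <= kappa_nq n q.
Proof.
apply: (@leq_trans (kappa (hrev n q) (ord_tuple n))).
  rewrite /kappa; case: excluded_middle_informative => [ex|ne].
    case: (ex_minnP ex) => k hk _.
    move/existsP: hk => [f /existsP [w /and3P [uw rw sw]]].
    exact: (lower hq uw rw sw).
  by exfalso; apply: ne; exists n; exact: existence.
rewrite /kappa_nq.
apply: leq_trans (leq_bigmax (hrev n q)).
apply: (leq_bigmax_cond (ord_tuple n)).
exact: enum_uniq.
Qed.
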